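(* In the setting described in the context, let $$X=W^{1/2}R^T\big(RWR^TL_{e,s}^\tau RWR^T\big)^{-1}RW^{1/2},\qquad Y=W^{1/2}R^T\big(RWR^T\big)^{-1}RW^{1/2}.$$ Then $\lambda_{\max}(X+Y)=\lambda_{\max}(X)+\lambda_{\max}(Y)$.
   Context: Let $\mathcal G$ be an undirected, connected graph without self-loops, with node set $\{1,\dots,n\}$ ($n\ge2$) and edge set $\mathcal E$, $m=|\mathcal E|$. Give each edge an arbitrary orientation; the incidence matrix $D\in\mathbb R^{n\times m}$ has $D_{il}=1$ if node $i$ is the initial node of edge $l$, $-1$ if it is the terminal node, and $0$ otherwise. Fix a spanning tree $\mathcal G_\tau$ and order the edges so the first $n-1$ are tree edges; write $D=[D_\tau\ D_c]$ with $D_\tau\in\mathbb R^{n\times(n-1)}$. Set $T_\tau^c=(D_\tau^TD_\tau)^{-1}D_\tau^TD_c$ and $R=[I_{n-1}\ T_\tau^c]\in\mathbb R^{(n-1)\times m}$. Let $W=\mathrm{diag}(w_1,\dots,w_m)$, $w_l>0$, and $E=\mathrm{diag}(\epsilon_1,\dots,\epsilon_n)$, $\epsilon_i>0$; $W^{1/2}$ is taken entrywise. Define $L_{e,s}^\tau=D_\tau^TE^{-1}D_\tau$. $\lambda_{\max}$ denotes the largest eigenvalue of a symmetric matrix. *)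

(* Defs.v *)
From HB Require Import structures.
From mathcomp Require Import all_boot all_order all_algebra.
From mathcomp Require Import boolp classical_sets reals.
Set Implicit Arguments. Unset Strict Implicit. Unset Printing Implicit Defensive.
Import Order.TTheory GRing.Theory Num.Theory.
Local Open Scope ring_scope.

(* Graph data: nodes 'I_(k.+1) (n = k+1), edges 'I_(k + c) (m = k + c);
   edge l is oriented from [src l] (initial node) to [dst l] (terminal node).
   The first k = n-1 edges (lshift c l, l : 'I_k) are the spanning tree edges. *)

Definition no_self_loops n m (src dst : 'I_m -> 'I_n) : Prop :=
  forall l, src l != dst l.

Definition no_parallel_edges n m (src dst : 'I_m -> 'I_n) : Prop :=
  forall l l', l != l' ->
    ~~ (((src l == src l') && (dst l == dst l')) ||
        ((src l == dst l') && (dst l == src l'))).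

Definition tree_adj k c (src dst : 'I_(k + c) -> 'I_k.+1) : rel 'I_k.+1 :=
  fun i j => [exists l : 'I_k,
     ((src (lshift c l) == i) && (dst (lshift c l) == j)) ||
     ((src (lshift c l) == j) && (dst (lshift c l) == i))].

(* the first k = n-1 edges form a spanning tree: they connect all n nodes
   (a connected graph on n nodes with n-1 edges is a tree) *)
Definition first_edges_spanning_tree k c (src dst : 'I_(k + c) -> 'I_k.+1) : Prop :=
  forall i j : 'I_k.+1, connect (tree_adj src dst) i j.

Definition incidence (R : nzRingType) n m (src dst : 'I_m -> 'I_n) : 'M[R]_(n, m) :=
  \matrix_(i, l) ((i == src l)%:R - (i == dst l)%:R).

Section Mats.
Variable R : realType.
Variables k c : nat.
Variables (src dst : 'I_(k + c) -> 'I_k.+1).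

Definition Dmat : 'M[R]_(k.+1, k + c) := incidence R src dst.
Definition Dtau : 'M[R]_(k.+1, k) := lsubmx Dmat.
Definition Dc : 'M[R]_(k.+1, c) := rsubmx Dmat.
Definition Ttauc : 'M[R]_(k, c) :=
  invmx (Dtau^T *m Dtau) *m Dtau^T *m Dc.
Definition Rmat : 'M[R]_(k, k + c) := row_mx 1%:M Ttauc.

Definition Les (eps : 'rV[R]_k.+1) : 'M[R]_k :=
  Dtau^T *m invmx (diag_mx eps) *m Dtau.

Definition Whalf (w : 'rV[R]_(k + c)) : 'M[R]_(k + c) :=
  diag_mx (map_mx Num.sqrt w).

Definition Xmat (w : 'rV[R]_(k + c)) (eps : 'rV[R]_k.+1) : 'M[R]_(k + c) :=
  let W := diag_mx w in
  let M := Rmat *m W *m Rmat^T in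
  Whalf w *m Rmat^T *m invmx (M *m Les eps *m M) *m Rmat *m Whalf w.

Definition Ymat (w : 'rV[R]_(k + c)) : 'M[R]_(k + c) :=
  let W := diag_mx w in
  Whalf w *m Rmat^T *m invmx (Rmat *m W *m Rmat^T) *m Rmat *m Whalf w.
End Mats.

(* largest eigenvalue: the supremum of the (finite, nonempty for symmetric
   real matrices) set of real eigenvalues *)
Definition lambda_max (R : realType) p (A : 'M[R]_p) : R :=
  sup [set a : R | eigenvalue A a].

(* Main.v *)
Require Import Defs.
From HB Require Import structures.
From mathcomp Require Import all_boot all_order all_algebra.
From mathcomp Require Import boolp classical_sets reals.
From mathcomp Require Import complex polyrcf.
Set Implicit Arguments. Unset Strict Implicit. Unset Printing Implicit Defensive.
Import Order.TTheory GRing.Theory Num.Theory.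
Local Open Scope ring_scope.


Section Gen.
Variable R : realType.

Definition psd n (A : 'M[R]_n) := forall v : 'rV_n, 0 <= (v *m A *m v^T) 0 0.

Lemma vvT_ge0 n (v : 'rV[R]_n) : 0 <= (v *m v^T) 0 0.
Proof.
rewrite mxE; apply: sumr_ge0 => j _; rewrite mxE -expr2; exact: sqr_ge0.
Qed.

Lemma vvT_eq0 n (v : 'rV[R]_n) : (v *m v^T) 0 0 = 0 -> v = 0.
Proof.
rewrite mxE => h; apply/rowP => j; rewrite mxE.
have hge : forall i, predT i -> 0 <= v 0 i * v^T i 0.
  by move=> i _; rewrite mxE -expr2; exact: sqr_ge0.
have := psumr_eq0P hge h (i := j) isT.
by rewrite mxE -expr2 => /eqP; rewrite sqrf_eq0 => /eqP.
Qed.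

Lemma psd_congr n p (A : 'M[R]_n) (B : 'M_(p, n)) : psd A -> psd (B *m A *m B^T).
Proof.
move=> hA v; have -> : v *m (B *m A *m B^T) *m v^T = (v *m B) *m A *m (v *m B)^T.
  by rewrite trmx_mul !mulmxA.
exact: hA.
Qed.

Lemma psd_inv n (A : 'M[R]_n) : A^T = A -> psd A -> psd (invmx A).
Proof.
move=> As hA; case: (boolP (A \in unitmx)) => Au; last by rewrite invmx_out.
move=> v; have -> : v *m invmx A *m v^T = (v *m invmx A) *m A *m (v *m invmx A)^T.
  by rewrite trmx_mul trmx_inv As !mulmxA mulmxKV.
exact: hA.
Qed.

Lemma psd_diag n (d : 'rV[R]_n) : (forall i, 0 <= d 0 i) -> psd (diag_mx d).
Proof.
move=> hd v; rewrite mul_mx_diag mxE; apply: sumr_ge0 => j _; rewrite !mxE.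
rewrite mulrAC -expr2; apply: mulr_ge0 => //; exact: sqr_ge0.
Qed.

Lemma eig_ubound n (A : 'M[R]_n) : has_ubound [set a : R | eigenvalue A a].
Proof.
have cp0 : char_poly A != 0 by apply: monic_neq0; apply: char_poly_monic.
exists (cauchy_bound (char_poly A)) => a /=.
rewrite eigenvalue_root_char => /eqP /(cauchy_boundP cp0) h.
exact: le_trans (ler_norm a) (ltW h).
Qed.

End Gen.
Lemma sym_nonzero_eig (R : rcfType) n (A : 'M[R]_n) :
  A^T = A -> A != 0 -> exists2 a, a != 0 & eigenvalue A a.
Proof.
move=> As Anz.
pose toC := real_complex R.
pose AC := map_mx toC A.
have ACh : AC \is hermsymmx.
  apply: realsym_hermsym.
    apply/is_hermitianmxP; rewrite expr0 scale1r map_mx_id //.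
    by rewrite /AC map_trmx As.
  apply/mxOverP => i j; rewrite mxE; apply/complex_realP; by exists (A i j).
have /hermitian_normalmx /orthomx_spectralP ACE := ACh.
have dreal := hermitian_spectral_diag_real ACh.
set U := spectralmx AC in ACE.
set d := spectral_diag AC in ACE dreal.
have Uu : U \in unitmx by apply: spectral_unit.
have [i di0] : exists i, d 0 i != 0.
  apply/existsP; apply: contraNT Anz; rewrite negb_exists => /forallP d0.
  have : d = 0 by apply/rowP => j; rewrite mxE; apply/eqP; have := d0 j; rewrite negbK.
  move=> dz; apply/eqP/matrixP => p q.
  have /matrixP/(_ p q) := ACE; rewrite dz linear0 mulmx0 mul0mx !mxE.
  by move/complexI.
have eigC : eigenvalue AC (d 0 i).
  apply/eigenvalueP; exists (delta_mx 0 i *m U).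
    rewrite ACE !mulmxA mulmxK //.
    have -> : (delta_mx 0 i : 'rV[R[i]]_n) *m diag_mx d = d 0 i *: delta_mx 0 i.
      apply/matrixP => p q; rewrite mul_mx_diag !mxE.
      rewrite ord1 eqxx /=; case: (q =P i) => [->|/eqP qi]; first by rewrite mulrC.
      by rewrite mul0r mulr0.
    by rewrite scalemxAl.
  rewrite mulmx_free_eq0 ?row_free_unit //; apply/eqP => /matrixP/(_ 0 i).
  by rewrite !mxE !eqxx /= => /eqP; rewrite oner_eq0.
move/mxOverP: dreal => dreal.
have dr : (complex.Re (d 0 i))%:C%C = d 0 i := RRe_real (dreal 0 i).
exists (complex.Re (d 0 i)).
  by apply: contraNneq di0 => h; rewrite -dr h.
rewrite eigenvalue_root_char -(fmorph_root toC) map_char_poly.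
rewrite -eigenvalue_root_char.
rewrite -dr in eigC. exact: eigC.
Qed.

Local Open Scope classical_set_scope.
Lemma key (R : realType) n (X P : 'M[R]_n) :
  X^T = X -> psd X -> P *m P = P -> X *m P = X -> P *m X = X ->
  (exists2 v : 'rV_n, v != 0 & v *m P = v) ->
  lambda_max (X + P) = lambda_max X + lambda_max P.
Proof.
move=> Xs Xpsd PP XP PX [v0 v0n v0P].
pose T := [set a : R | exists2 v : 'rV_n, v != 0 & v *m P = v /\ v *m X = a *: v].
have inT a (v : 'rV_n) : v != 0 -> a != 0 -> v *m X = a *: v -> T a.
  move=> vn an vX; exists v => //; split => //.
  apply: (scalerI an); rewrite scalemxAl -vX -mulmxA XP //.
have [t0 Tt0] : exists t, T t.
  case: (eqVneq X 0) => [X0|Xn].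
    by exists 0, v0 => //; split => //; rewrite X0 mulmx0 scale0r.
  have [a an /eigenvalueP [v vX vn]] := sym_nonzero_eig Xs Xn.
  by exists a; apply: (inT a v).
have Tge0 t : T t -> 0 <= t.
  move=> [v vn [_ vX]].
  have := Xpsd v; rewrite vX -scalemxAl mxE.
  have : 0 < (v *m v^T) 0 0.
    rewrite lt_def vvT_ge0 andbT; apply/eqP => /vvT_eq0 h; by rewrite h eqxx in vn.
  by move=> hp; rewrite pmulr_lge0.
set SX := [set a : R | eigenvalue X a].
set SP := [set a : R | eigenvalue P a].
set SXP := [set a : R | eigenvalue (X + P) a].
have SXT a : SX a -> a = 0 \/ T a.
  move=> /eigenvalueP [v vX vn]; case: (eqVneq a 0) => [->|an]; first by left.
  by right; apply: (inT a v).
have TSX a : T a -> SX a.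
  by move=> [v vn [_ vX]]; apply/eigenvalueP; exists v.
have SXPT a : SXP a -> a = 0 \/ T (a - 1).
  move=> /eigenvalueP [v vXP vn]; case: (eqVneq a 0) => [->|an]; first by left.
  right; exists v => //.
  have h1 : (v *m (X + P)) *m P = v *m (X + P).
    by rewrite -mulmxA mulmxDl XP PP.
  have vP : v *m P = v.
    apply: (scalerI an); rewrite scalemxAl -vXP //.
  split => //; move: vXP; rewrite mulmxDr vP scalerBl scale1r => <-.
  by rewrite addrK.
have TSXP a : T a -> SXP (a + 1).
  move=> [v vn [vP vX]]; apply/eigenvalueP; exists v => //.
  by rewrite mulmxDr vP vX scalerDl scale1r.
have SP1 a : SP a -> a <= 1.
  move=> /eigenvalueP [v vP vn].
  have h1 : v *m P *m P = (a * a) *: v by rewrite vP -scalemxAl vP scalerA.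
  have : (a * a) *: v = a *: v by rewrite -h1 -mulmxA PP.
  move=> /eqP; rewrite -subr_eq0 -scalerBl scaler_eq0 (negbTE vn) orbF subr_eq0.
  move=> /eqP haa; have : a * (a - 1) = 0 by rewrite mulrBr mulr1 haa subrr.
  move/eqP; rewrite mulf_eq0 => /orP [/eqP -> //|].
  by rewrite subr_eq0 => /eqP ->.
have SP1' : SP 1 by apply/eigenvalueP; exists v0; rewrite ?scale1r.
have hsT : has_sup T.
  split; first by exists t0.
  have [b hb] := eig_ubound X; exists b => x Tx; exact: hb x (TSX x Tx).
have hsX : has_sup SX by split; [exists t0; exact: TSX | exact: eig_ubound].
have hsXP : has_sup SXP by split; [exists (t0 + 1); exact: TSXP | exact: eig_ubound].
have hsP : has_sup SP by split; [exists 1 | exact: eig_ubound].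
have s0 : 0 <= sup T := le_trans (Tge0 _ Tt0) (sup_upper_bound hsT Tt0).
have eX : sup SX = sup T.
  apply/le_anti/andP; split.
    apply: ge_sup; first by exists t0; exact: TSX.
    by move=> a /SXT [->|Ta] //; apply: (sup_upper_bound hsT).
  apply: ge_sup; first by exists t0.
  by move=> a Ta; apply: (sup_upper_bound hsX); exact: TSX.
have eXP : sup SXP = sup T + 1.
  apply/le_anti/andP; split.
    apply: ge_sup; first by exists (t0 + 1); exact: TSXP.
    move=> a /SXPT [->|Ta]; first by rewrite addr_ge0.
    by rewrite -lerBlDr; apply: (sup_upper_bound hsT).
  rewrite -lerBrDr; apply: ge_sup; first by exists t0.
  by move=> a Ta; rewrite lerBrDr; apply: (sup_upper_bound hsXP); exact: TSXP.
have eP : sup SP = 1.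
  apply/le_anti/andP; split; first by apply: ge_sup => //; exists 1.
  exact: (sup_upper_bound hsP).
by rewrite /lambda_max -/SX -/SP -/SXP eX eXP eP.
Qed.

Local Close Scope classical_set_scope.

Theorem lemma7 (R : realType) (k c : nat)
  (src dst : 'I_(k + c) -> 'I_k.+1)
  (w : 'rV[R]_(k + c)) (eps : 'rV[R]_k.+1) :
  (0 < k)%N ->
  no_self_loops src dst ->
  no_parallel_edges src dst ->
  first_edges_spanning_tree src dst ->
  (forall l, 0 < w 0 l) ->
  (forall i, 0 < eps 0 i) ->
  lambda_max (Xmat src dst w eps + Ymat src dst w) =
  lambda_max (Xmat src dst w eps) + lambda_max (Ymat src dst w).
Proof.
move=> kpos _ _ _ wpos epspos.
set Rm := Rmat R src dst.
set Wh := Whalf w.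
set W := diag_mx w.
pose Ct := Rm *m Wh.
have hWh : Wh^T = Wh by rewrite /Wh /Whalf tr_diag_mx.
have hWW : Wh *m Wh = W.
  rewrite /Wh /Whalf mulmx_diag; congr diag_mx; apply/rowP => j.
  by rewrite !mxE -expr2 sqr_sqrtr // ltW.
set M := Rm *m W *m Rm^T.
have CCt : Ct *m Ct^T = M.
  by rewrite /Ct trmx_mul hWh !mulmxA -(mulmxA Rm Wh Wh) hWW.
have Ckey (u : 'rV[R]_k) : u *m Ct = 0 -> u = 0.
  move=> h; apply/rowP => j; have := congr1 (fun A : 'rV[R]_(k + c) => A 0 (lshift c j)) h.
  rewrite /Ct /Rm /Rmat /Wh /Whalf mulmxA mul_mx_row mulmx1 mul_mx_diag mxE (row_mxEl u) !mxE.
  move=> /eqP; rewrite mulf_eq0 => /orP [/eqP //|].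
  by rewrite sqrtr_eq0 leNgt wpos.
have Mu : M \in unitmx.
  rewrite -row_free_unit -kermx_eq0; apply/negPn/negP => /rowV0Pn [v /sub_kermxP vM vn].
  have h : (v *m Ct) *m (v *m Ct)^T = 0.
    by rewrite trmx_mul mulmxA -(mulmxA v Ct) CCt vM mul0mx.
  have := vvT_eq0 (v := v *m Ct); rewrite h mxE => /(_ erefl) /Ckey vz.
  by rewrite vz eqxx in vn.
have Ms : M^T = M by rewrite -CCt trmx_mul trmxK.
set L := Les src dst eps.
have Ls : L^T = L.
  by rewrite /L /Les !trmx_mul trmxK trmx_inv tr_diag_mx !mulmxA.
have Lpsd : psd L.
  have hE : psd (invmx (diag_mx eps)).
    by apply: psd_inv; [exact: tr_diag_mx | apply: psd_diag => i; exact: ltW].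
  by have := psd_congr (Dtau R src dst)^T hE; rewrite trmxK.
set Q := M *m L *m M.
have Qs : Q^T = Q by rewrite /Q (trmx_mul (M *m L) M) (trmx_mul M L) Ms Ls mulmxA.
have Qpsd : psd Q by have := psd_congr M Lpsd; rewrite Ms.
set N := invmx Q.
have Ns : N^T = N by rewrite /N trmx_inv Qs.
have Npsd : psd N by apply: psd_inv.
have eX : Xmat src dst w eps = Ct^T *m N *m Ct.
  by rewrite /Xmat /= -/Rm -/Wh -/W -/M -/L -/Q -/N /Ct (trmx_mul Rm Wh) hWh !mulmxA.
have eY : Ymat src dst w = Ct^T *m invmx M *m Ct.
  by rewrite /Ymat /= -/Rm -/Wh -/W -/M /Ct (trmx_mul Rm Wh) hWh !mulmxA.
rewrite eX eY; clearbody N Q M Ct; apply: key.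
- by rewrite (trmx_mul (Ct^T *m N) Ct) (trmx_mul Ct^T N) trmxK Ns mulmxA.
- by have := psd_congr Ct^T Npsd; rewrite trmxK.
- by rewrite !mulmxA -(mulmxA (Ct^T *m invmx M) Ct Ct^T) CCt mulmxKV.
- by rewrite !mulmxA -(mulmxA (Ct^T *m N) Ct Ct^T) CCt mulmxK.
- by rewrite !mulmxA -(mulmxA (Ct^T *m invmx M) Ct Ct^T) CCt mulmxKV.
exists (const_mx 1 *m Ct).
  apply/negP => /eqP /Ckey /matrixP /(_ 0 (Ordinal kpos)); rewrite !mxE.
  by move/eqP; rewrite oner_eq0.
by rewrite !mulmxA -(mulmxA _ Ct Ct^T) CCt mulmxK.
Qed.
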